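(* Let $A$ be a real $n\times n$ matrix and let $\mathcal{A} = \begin{pmatrix} 0 & A \\ A^T & 0 \end{pmatrix}$ (a real symmetric $2n\times 2n$ matrix). Then $$e^{\mathcal{A}} = \begin{pmatrix} \cosh\left(\sqrt{AA^T}\right) & A\left(\sqrt{A^TA}\right)^{\dagger}\sinh\left(\sqrt{A^TA}\right) \\ \sinh\left(\sqrt{A^TA}\right)\left(\sqrt{A^TA}\right)^{\dagger}A^T & \cosh\left(\sqrt{A^TA}\right) \end{pmatrix}.$$
   Context: For a symmetric positive semidefinite matrix $M$, $\sqrt{M}$ denotes its unique symmetric positive semidefinite square root, and $\cosh$, $\sinh$ of a symmetric matrix are defined by the usual power series (equivalently via its eigendecomposition). $B^{\dagger}$ denotes the Moore–Penrose generalized inverse of $B$. In the paper $A$ is the adjacency matrix of a directed graph, but the identity is stated for this block matrix built from $A$. *)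

(* Defs.v *)
From HB Require Import structures.
From mathcomp Require Import all_boot all_order all_algebra.
From mathcomp Require Import all_classical all_reals all_analysis.
Set Implicit Arguments. Unset Strict Implicit. Unset Printing Implicit Defensive.
Import Order.TTheory GRing.Theory Num.Theory.
Import numFieldNormedType.Exports.
Local Open Scope classical_set_scope.
Local Open Scope ring_scope.

Definition mxseries (R : realType) (n : nat) (c : nat -> R) (M : 'M[R]_n) : 'M[R]_n :=
  limn (series (fun k => c k *: M ^+ k)).

Definition expm (R : realType) (n : nat) (M : 'M[R]_n) : 'M[R]_n :=
  mxseries (fun k => (k`!%:R)^-1) M.

Definition coshm (R : realType) (n : nat) (M : 'M[R]_n) : 'M[R]_n :=
  mxseries (fun k => if odd k then 0 else (k`!%:R)^-1) M.
Definition sinhm (R : realType) (n : nat) (M : 'M[R]_n) : 'M[R]_n :=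
  mxseries (fun k => if odd k then (k`!%:R)^-1 else 0) M.

Definition symmetricmx (R : realType) (n : nat) (M : 'M[R]_n) : Prop := M^T = M.

Definition psdmx (R : realType) (n : nat) (M : 'M[R]_n) : Prop :=
  symmetricmx M /\ forall x : 'cV[R]_n, 0 <= (x^T *m M *m x) 0 0.

Definition sqrtm (R : realType) (n : nat) (M : 'M[R]_n) : 'M[R]_n :=
  xget 0 [set S : 'M[R]_n | psdmx S /\ S *m S = M].

Definition pinvmx_MP (R : realType) (m n : nat) (B : 'M[R]_(m, n)) : 'M[R]_(n, m) :=
  xget 0 [set X : 'M[R]_(n, m) |
    [/\ B *m X *m B = B, X *m B *m X = X,
        (B *m X)^T = B *m X & (X *m B)^T = X *m B]].

(* Main.v *)
Require Import Defs.
From HB Require Import structures.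
From mathcomp Require Import all_boot all_order all_algebra.
From mathcomp Require Import all_classical all_reals all_analysis.
From mathcomp Require Import complex.
From mathcomp Require Import ring lra.
Import Order.TTheory GRing.Theory Num.Theory.
Local Open Scope ring_scope.
Import numFieldNormedType.Exports.
Local Open Scope classical_set_scope.
Local Open Scope ring_scope.
HB.instance Definition _ (R : realType) m n := Complete.on 'M[R]_(m, n).

Section S.
Variable R : realType.

Lemma complex_realE (x : R[i]) : x \is Num.real -> x = (complex.Re x)%:C%C.
Proof.
case: x => a b; rewrite realE !lecE /= => /orP[]/andP[/eqP h _].
  by rewrite h.
by rewrite -h.
Qed.

Lemma key_spec n (N : 'M[R]_n.+1) : N^T = N ->
  exists s : seq R, uniq s /\ horner_mx N (\prod_(x <- s) ('X - x%:P)) = 0.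
Proof.
move=> Nsym.
pose f := real_complex R.
pose Nc := map_mx f N.
have Ncsym : Nc \is symmetricmx.
  apply/is_hermitianmxP; rewrite expr0 scale1r.
  apply/matrixP => i j; rewrite !mxE; have := congr1 (fun M : 'M[R]_n.+1 => M j i) Nsym; by rewrite /= mxE => ->.
have Ncreal : Nc \is a mxOver Num.real.
  apply/mxOverP => i0 j0; rewrite mxE realE.
  have [h|h] := lerP 0 (N i0 j0).
    by rewrite /f ler0c h.
  by rewrite -(rmorph0 f) /f !lecR (ltW h) orbT.
have herm := realsym_hermsym Ncsym Ncreal.
have /orthomx_spectralP eq := hermitian_normalmx herm.
have dreal := hermitian_spectral_diag_real herm.
set P := spectralmx Nc in eq; set d := spectral_diag Nc in eq dreal.
exists (undup [seq complex.Re (d 0 i) | i <- enum 'I_n.+1]); split; first exact: undup_uniq.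
set m := (\prod_(_ <- _) _).
suff H : map_mx (real_complex R) (horner_mx N m) = map_mx (real_complex R) 0 by exact: map_mx_inj H.
rewrite map_horner_mx -/Nc map_mx0 eq horner_mx_uconjC ?spectral_unit //.
rewrite horner_mx_diag.
suff -> : map_mx (horner (map_poly f (\prod_(x <- undup [seq complex.Re (d 0 i) | i <- enum 'I_n.+1]) ('X - x%:P)))) d = 0.
  by rewrite linear0 mulmx0 mul0mx.
apply/matrixP => i j; rewrite (ord1 i) !mxE map_prod_XsubC horner_prod.
apply/eqP; rewrite prodf_seq_eq0; apply/hasP.
exists (complex.Re (d 0 j)).
  by rewrite mem_undup; apply/map_f; rewrite mem_enum.
rewrite hornerXsubC [X in _ - X](_ : _ = d 0 j) ?subrr //.
  by rewrite eqxx.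
exact (esym (complex_realE _ (mxOverP dreal 0 j))).
Qed.

Lemma interp (s : seq R) (g : R -> R) :
  exists p : {poly R}, forall x, x \in s -> p.[x] = g x.
Proof.
elim: s => [|a s [p hp]]; first by exists 0.
have [ains|anin] := boolP (a \in s).
  by exists p => x; rewrite in_cons => /orP[/eqP->|]; [exact: hp | exact: hp].
pose r := \prod_(y <- s) ('X - y%:P).
have ra : r.[a] != 0.
  rewrite /r horner_prod prodf_seq_neq0; apply/allP => y ys /=.
  by rewrite hornerXsubC subr_eq0; apply: contraNneq anin => ->.
exists (p + ((g a - p.[a]) / r.[a]) *: r) => x; rewrite in_cons => /orP[/eqP->|xs].
  by rewrite hornerD hornerZ divfK // addrC subrK.
rewrite hornerD hornerZ.
have -> : r.[x] = 0.
  rewrite /r horner_prod; apply/eqP; rewrite prodf_seq_eq0; apply/hasP.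
  by exists x => //=; rewrite hornerXsubC subrr.
by rewrite mulr0 addr0 hp.
Qed.

Lemma calc n (N : 'M[R]_n.+1) (s : seq R) : uniq s ->
  horner_mx N (\prod_(x <- s) ('X - x%:P)) = 0 ->
  forall p q, (forall x, x \in s -> p.[x] = q.[x]) -> horner_mx N p = horner_mx N q.
Proof.
move=> us hm p q hpq; apply/eqP; rewrite -subr_eq0 -rmorphB.
have : \prod_(x <- s) ('X - x%:P) %| (p - q).
  apply: uniq_roots_dvdp; last by rewrite uniq_rootsE.
  by apply/allP => x xs; rewrite rootE !hornerE hpq // subrr.
by case/dvdpP => r ->; rewrite rmorphM /= hm mulr0.
Qed.

Lemma tr_horner n (N : 'M[R]_n.+1) p : (horner_mx N p)^T = horner_mx N^T p.
Proof.
elim/poly_ind: p => [|p c IH]; first by rewrite !rmorph0 trmx0.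
rewrite !rmorphD !rmorphM /= !horner_mx_X !horner_mx_C linearD /= tr_scalar_mx.
rewrite -!mulmxE trmx_mul IH; congr (_ + _).
by have := comm_mx_horner p (comm_mx_refl N^T) => /esym.
Qed.

Lemma sym_horner n (N : 'M[R]_n.+1) p : N^T = N -> (horner_mx N p)^T = horner_mx N p.
Proof. by move=> h; rewrite tr_horner h. Qed.

Lemma rv_sq k (w : 'rV[R]_k) : (w *m w^T) 0 0 = \sum_i w 0 i ^+ 2.
Proof. by rewrite mxE; apply: eq_bigr => i _; rewrite mxE expr2. Qed.

Lemma rv_sq_ge0 k (w : 'rV[R]_k) : 0 <= (w *m w^T) 0 0.
Proof. by rewrite rv_sq sumr_ge0 // => i _; rewrite sqr_ge0. Qed.

Lemma rv_sq_eq0 k (w : 'rV[R]_k) : (w *m w^T) 0 0 = 0 -> w = 0.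
Proof.
rewrite rv_sq => /psumr_eq0P h; apply/rowP => i; rewrite mxE.
by apply/eqP; rewrite -sqrf_eq0 h // => i0 _; rewrite sqr_ge0.
Qed.

Lemma trmul_eq0 m k (B : 'M[R]_(m, k)) : B^T *m B = 0 -> B = 0.
Proof.
move=> h; apply/matrixP => i j; rewrite mxE.
have := congr1 (fun M : 'M[R]_k => M j j) h; rewrite mxE [in RHS]mxE => /eqP.
rewrite psumr_eq0 => [/allP hb|i0 _]; last by rewrite mxE -expr2 sqr_ge0.
by have := hb i (mem_index_enum _); rewrite mxE -expr2 sqrf_eq0 => /eqP.
Qed.


Lemma psd_quad n (A : 'M[R]_n) (v : 'rV_n) : 0 <= (v *m (A^T *m A) *m v^T) 0 0.
Proof.
have -> : v *m (A^T *m A) *m v^T = (v *m A^T) *m (v *m A^T)^T.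
  by rewrite trmx_mul trmxK !mulmxA.
exact: rv_sq_ge0.
Qed.

Lemma unit_shift n (A : 'M[R]_n.+1) x : x < 0 -> (A^T *m A - x%:M) \in unitmx.
Proof.
move=> x0; rewrite unitmxE unitfE; apply/negP => /det0P [v v0 hv].
have hv' : v *m (A^T *m A) = x *: v.
  by apply/eqP; rewrite -subr_eq0 -mul_mx_scalar -mulmxBr hv.
have := psd_quad _ A v; rewrite hv' -scalemxAl mxE.
have : 0 < (v *m v^T) 0 0.
  rewrite lt_def rv_sq_ge0 andbT; apply/eqP => /rv_sq_eq0 h.
  by move: v0; rewrite h eqxx.
move=> hp; rewrite pmulr_lge0 // => h0.
by move: (lt_le_trans x0 h0); rewrite ltxx.
Qed.

Lemma key_psd n (A : 'M[R]_n.+1) : exists s : seq R,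
  [/\ uniq s, all (fun x => 0 <= x) s &
     horner_mx (A^T *m A) (\prod_(x <- s) ('X - x%:P)) = 0].
Proof.
have hsym : (A^T *m A)^T = A^T *m A by rewrite trmx_mul trmxK.
have [s [us hm]] := key_spec _ (A^T *m A) hsym.
exists [seq x <- s | 0 <= x]; split.
- exact: filter_uniq.
- exact: filter_all.
move: hm; rewrite (bigID (fun x => 0 <= x)) /= -[\prod_(x <- s | 0 <= x) _]big_filter rmorphM /= => h.
set u := horner_mx _ (\prod_(i <- s | ~~ _) _) in h.
have uu : u \is a GRing.unit.
  rewrite /u rmorph_prod; apply: unitr_prod => x /= hx.
  have x0 : x < 0 by rewrite ltNge.
  by rewrite rmorphB /= horner_mx_X horner_mx_C; exact: unit_shift.
by rewrite -(mulrK uu (horner_mx _ _)) h mul0r.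
Qed.

Lemma sqrt_exists n (A : 'M[R]_n) : exists S, psdmx S /\ S *m S = A^T *m A.
Proof.
case: n A => [|n] A.
  exists 0; split; last by apply/matrixP => [[]].
  split; first by apply/matrixP => [[]].
  by move=> x; rewrite mulmx0 mul0mx mxE.
have [s [us /allP s0 hm]] := key_psd _ A.
have [p2 hp2] := interp s Num.sqrt.
have [p4 hp4] := interp s (fun x => Num.sqrt (Num.sqrt x)).
set N := A^T *m A in hm *.
have Nsym : N^T = N by rewrite /N trmx_mul trmxK.
have e1 : horner_mx N (p2 * p2) = horner_mx N 'X.
  apply: (calc _ _ _ us hm) => x xs; rewrite hornerM hp2 // hornerX -expr2 sqr_sqrtr //.
  exact: s0.
have e2 : horner_mx N (p4 * p4) = horner_mx N p2.
  apply: (calc _ _ _ us hm) => x xs; rewrite hornerM hp4 // hp2 // -expr2 sqr_sqrtr //.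
rewrite rmorphM /= horner_mx_X in e1; rewrite rmorphM /= in e2.
exists (horner_mx N p2); split; last by rewrite mulmxE.
split; first exact: sym_horner.
move=> x; rewrite -e2 -mulmxE.
set T := horner_mx N p4.
have Tsym : T^T = T by exact: sym_horner.
have -> : x^T *m (T *m T) *m x = (x^T *m T) *m (x^T *m T)^T.
  by rewrite trmx_mul trmxK Tsym !mulmxA.
exact: rv_sq_ge0.
Qed.

Lemma pinv_exists n (S : 'M[R]_n) : S^T = S -> exists X : 'M[R]_n,
    [/\ S *m X *m S = S, X *m S *m X = X,
        (S *m X)^T = S *m X & (X *m S)^T = X *m S].
Proof.
case: n S => [|n] S Ssym.
  by exists 0; split; apply/matrixP => [[]].
have [s [us hm]] := key_spec _ S Ssym.
have [q hq] := interp s (fun x => x^-1).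
have e1 : horner_mx S ('X * q * 'X) = horner_mx S 'X.
  apply: (calc _ _ _ us hm) => x xs; rewrite !hornerM hq // hornerX.
  by have [->|x0] := eqVneq x 0; rewrite ?mulr0 // mulfV // mul1r.
have e2 : horner_mx S (q * 'X * q) = horner_mx S q.
  apply: (calc _ _ _ us hm) => x xs; rewrite !hornerM hq // hornerX.
  by have [->|x0] := eqVneq x 0; rewrite ?invr0 ?mulr0 // mulVf // mul1r.
have e3 := sym_horner _ _ ('X * q) Ssym.
have e4 := sym_horner _ _ (q * 'X) Ssym.
rewrite !rmorphM /= horner_mx_X in e1 e2 e3 e4.
by exists (horner_mx S q); rewrite !mulmxE.
Qed.

Lemma AXS n (A S X : 'M[R]_n) : S^T = S -> S *m S = A^T *m A ->
  S *m X *m S = S -> (X *m S)^T = X *m S -> A *m X *m S = A.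
Proof.
move=> Ssym hSS hSXS hXS.
have e1 : S *m (1%:M - X *m S) = 0 by rewrite mulmxBr mulmx1 mulmxA hSXS subrr.
apply/eqP; rewrite -subr_eq0; apply/eqP; apply: trmul_eq0.
have -> : A *m X *m S - A = - (A *m (1%:M - X *m S)).
  by rewrite mulmxBr mulmx1 opprB mulmxA.
rewrite linearN /= linearN /= mulNmx opprK trmx_mul -!mulmxA [A^T *m _]mulmxA -hSS.
by rewrite -[S *m S *m _]mulmxA e1 !mulmx0.
Qed.

End S.

Section A.
Variable R : realType.

Lemma nm_le m n (x : 'M[R]_(m, n)) b : 0 <= b -> (forall i j, `|x i j| <= b) -> `|x| <= b.
Proof.
move=> b0 h; rewrite [leLHS]/Num.Def.normr /= mx_normrE; apply/bigmax_leP; split => // ij _; exact: h.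
Qed.

Lemma nm_ge m n (x : 'M[R]_(m, n)) i j : `|x i j| <= `|x|.
Proof.
rewrite [leRHS]/Num.Def.normr /= mx_normrE; apply/bigmax_geP; right; exists (i, j) => //.
Qed.

Lemma nm_mul m p q (X : 'M[R]_(m, p)) (Y : 'M[R]_(p, q)) :
  `|X *m Y| <= p%:R * `|X| * `|Y|.
Proof.
apply: nm_le; first by rewrite !mulr_ge0.
move=> i j; rewrite mxE (le_trans (ler_norm_sum _ _ _)) //.
apply: le_trans (_ : \sum_(l < p) (`|X| * `|Y|) <= _).
  apply: ler_sum => l _; rewrite normrM ler_pM //; exact: nm_ge.
by rewrite sumr_const card_ord -mulrA mulr_natl.
Qed.

Lemma nm_pow n (M : 'M[R]_n) k : `|M ^+ k| <= (n%:R * `|M|) ^+ k.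
Proof.
elim: k => [|k IH].
  rewrite expr0; apply: nm_le => // i j; rewrite mxE.
  by case: (i == j); rewrite ?normr1 ?normr0.
rewrite exprS -mulmxE exprS (le_trans (nm_mul _ _ _ _ _)) // //.
by apply: ler_wpM2l => //; rewrite mulr_ge0.
Qed.

Lemma cvg_mxseries n (M : 'M[R]_n) (c : nat -> R) :
  (forall k, `|c k| <= (k`!%:R)^-1) -> cvgn (series (fun k => c k *: M ^+ k)).
Proof.
move=> hc; apply: normed_cvg.
apply: series_le_cvg; last exact: (is_cvg_series_exp_coeff (n%:R * `|M|)).
- by move=> k; exact: normr_ge0.
- by move=> k; apply: exp_coeff_ge0; rewrite mulr_ge0.
move=> k /=; rewrite /exp_coeff /= normrZ mulrC.
by apply: ler_pM => //; exact: nm_pow.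
Qed.


Lemma lip_cvg (U V : normedModType R) (g : U -> V) (K : R) (f : nat -> U) (a : U) :
  0 <= K -> (forall x y, `|g x - g y| <= K * `|x - y|) ->
  f @ \oo --> a -> (fun N => g (f N)) @ \oo --> g a.
Proof.
move=> K0 hg /cvgrPdist_le hf; apply/cvgrPdist_le => e e0.
have K1 : 0 < K + 1 by rewrite ltr_pwDr.
have := hf (e / (K + 1)) (divr_gt0 e0 K1).
apply: filterS => t ht; apply: (le_trans (hg _ _)).
apply: (le_trans (ler_wpM2l K0 ht)).
by rewrite mulrA ler_pdivrMr // mulrDr mulr1 [K * e]mulrC lerDl ltW.
Qed.

Lemma nm_block m1 m2 n1 n2 (a : 'M[R]_(m1, n1)) (b : 'M[R]_(m1, n2))
   (c : 'M[R]_(m2, n1)) (d : 'M[R]_(m2, n2)) :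
  `|block_mx a b c d| <= `|a| + `|b| + `|c| + `|d|.
Proof.
apply: nm_le; first by rewrite !addr_ge0.
have ha := normr_ge0 a; have hb := normr_ge0 b.
have hc := normr_ge0 c; have hd := normr_ge0 d.
move=> i j; rewrite -(fintype.splitK i) -(fintype.splitK j).
case: (fintype.split i) => i'; case: (fintype.split j) => j'.
- have := nm_ge _ _ a i' j'; rewrite /= block_mxEul; lra.
- have := nm_ge _ _ b i' j'; rewrite /= block_mxEur; lra.
- have := nm_ge _ _ c i' j'; rewrite /= block_mxEdl; lra.
- have := nm_ge _ _ d i' j'; rewrite /= block_mxEdr; lra.
Qed.

End A.

Section B.
Variable R : realType.
Variable n : nat.
Variables A X S1 S2 : 'M[R]_n.
Let B := block_mx 0 A A^T 0 : 'M[R]_(n + n).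

Lemma B2 : B ^+ 2 = block_mx (A *m A^T) 0 0 (A^T *m A).
Proof.
by rewrite expr2 -mulmxE /B mulmx_block !mulmx0 !mul0mx !addr0 !add0r.
Qed.

Lemma blkdiag_pow (P Q : 'M[R]_n) j :
  (block_mx P 0 0 Q : 'M[R]_(n + n)) ^+ j = block_mx (P ^+ j) 0 0 (Q ^+ j).
Proof.
elim: j => [|j IH].
  by rewrite !expr0 -scalar_mx_block.
by rewrite !exprS IH -!mulmxE mulmx_block !mulmx0 !mul0mx !addr0 !add0r.
Qed.

Lemma Beven j : B ^+ (2 * j) = block_mx ((A *m A^T) ^+ j) 0 0 ((A^T *m A) ^+ j).
Proof. by rewrite exprM B2 blkdiag_pow. Qed.

Lemma Bodd j : B ^+ (2 * j).+1 =
  block_mx 0 ((A *m A^T) ^+ j *m A) ((A^T *m A) ^+ j *m A^T) 0.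
Proof.
by rewrite exprSr Beven -mulmxE /B mulmx_block !mulmx0 !mul0mx !addr0 !add0r.
Qed.

Lemma comm_pow j : A *m (A^T *m A) ^+ j = (A *m A^T) ^+ j *m A.
Proof.
elim: j => [|j IH]; first by rewrite !expr0 mulmx1 mul1mx.
rewrite exprS -mulmxE !mulmxA -[A *m A^T *m A *m _]mulmxA IH.
by rewrite exprS -mulmxE !mulmxA.
Qed.

Definition cc (k : nat) : R := if odd k then 0 else (k`!%:R)^-1.
Definition sc (k : nat) : R := if odd k then (k`!%:R)^-1 else 0.

Hypothesis hS1 : S1 *m S1 = A *m A^T.
Hypothesis hS2 : S2 *m S2 = A^T *m A.
Hypothesis hAX : A *m X *m S2 = A.
Hypothesis hXA : S2 *m X *m A^T = A^T.

Lemma term k : (k`!%:R)^-1 *: B ^+ k =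
  block_mx (cc k *: S1 ^+ k) (A *m X *m (sc k *: S2 ^+ k))
           ((sc k *: S2 ^+ k) *m X *m A^T) (cc k *: S2 ^+ k).
Proof.
have [j hk] : exists j, k = (2 * j + odd k)%N.
  by exists k./2; rewrite mul2n addnC odd_double_half.
have e1 : S1 ^+ 2 = A *m A^T by rewrite expr2 -hS1 mulmxE.
have e2 : S2 ^+ 2 = A^T *m A by rewrite expr2 -hS2 mulmxE.
rewrite /cc /sc; case: (odd k) in hk *; rewrite hk ?addn1 ?addn0.
- rewrite Bodd scale_block_mx !scaler0 !scale0r -!scalemxAr -!scalemxAl.
  have u : A *m X *m S2 ^+ (2 * j).+1 = (A *m A^T) ^+ j *m A.
    by rewrite exprS exprM e2 -mulmxE mulmxA hAX comm_pow.
  have l : S2 ^+ (2 * j).+1 *m X *m A^T = (A^T *m A) ^+ j *m A^T.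
    by rewrite exprSr exprM e2 -mulmxE -!mulmxA (mulmxA S2 X) hXA.
  by rewrite u l.
- rewrite Beven scale_block_mx !scaler0 !scale0r mulmx0 !mul0mx.
  by rewrite !exprM e1 e2.
Qed.

Lemma series_blk N : series (fun k => (k`!%:R)^-1 *: B ^+ k) N =
  block_mx (series (fun k => cc k *: S1 ^+ k) N)
           (A *m X *m series (fun k => sc k *: S2 ^+ k) N)
           (series (fun k => sc k *: S2 ^+ k) N *m X *m A^T)
           (series (fun k => cc k *: S2 ^+ k) N).
Proof.
elim: N => [|N IH].
  by rewrite !seriesEnat /= !big_mkord !big_ord0 mulmx0 !mul0mx block_mx0.
by rewrite !seriesSr IH term add_block_mx mulmxDr !mulmxDl.
Qed.

End B.

Lemma sub_blk (R : realType) m1 m2 n1 n2 (a a' : 'M[R]_(m1, n1)) (b b' : 'M[R]_(m1, n2))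
   (c c' : 'M[R]_(m2, n1)) (d d' : 'M[R]_(m2, n2)) :
  block_mx a b c d - block_mx a' b' c' d' = block_mx (a - a') (b - b') (c - c') (d - d').
Proof. by rewrite opp_block_mx add_block_mx. Qed.

Lemma cc_bound (R : realType) k : `|cc R k| <= (k`!%:R)^-1.
Proof. by rewrite /cc; case: odd; rewrite ?normr0 ?invr_ge0 // ger0_norm // invr_ge0. Qed.

Lemma sc_bound (R : realType) k : `|sc R k| <= (k`!%:R)^-1.
Proof. by rewrite /sc; case: odd; rewrite ?normr0 ?invr_ge0 // ger0_norm // invr_ge0. Qed.

Theorem proposition1 (R : realType) (n : nat) (A : 'M[R]_n) :
  expm (block_mx 0 A A^T 0) =
  block_mx (coshm (sqrtm (A *m A^T)))
           (A *m pinvmx_MP (sqrtm (A^T *m A)) *m sinhm (sqrtm (A^T *m A)))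
           (sinhm (sqrtm (A^T *m A)) *m pinvmx_MP (sqrtm (A^T *m A)) *m A^T)
           (coshm (sqrtm (A^T *m A))).
Proof.
set S1 := sqrtm (A *m A^T); set S2 := sqrtm (A^T *m A); set X := pinvmx_MP S2.
have [_ h1] : psdmx S1 /\ S1 *m S1 = A *m A^T.
  have ex : exists S, [set S | psdmx S /\ S *m S = A *m A^T] S.
    by have [S hS] := sqrt_exists _ _ A^T; exists S; rewrite trmxK in hS.
  exact: (xgetPex 0 ex).
have [[S2sym _] h2] : psdmx S2 /\ S2 *m S2 = A^T *m A.
  have ex : exists S, [set S | psdmx S /\ S *m S = A^T *m A] S.
    exact: sqrt_exists.
  exact: (xgetPex 0 ex).
have [p1 p2 p3 p4] : [/\ S2 *m X *m S2 = S2, X *m S2 *m X = X,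
        (S2 *m X)^T = S2 *m X & (X *m S2)^T = X *m S2].
  have ex : exists Y, [set Y | [/\ S2 *m Y *m S2 = S2, Y *m S2 *m Y = Y,
        (S2 *m Y)^T = S2 *m Y & (Y *m S2)^T = Y *m S2]] Y.
    exact: pinv_exists.
  exact: (xgetPex 0 ex).
have hAX : A *m X *m S2 = A := AXS _ _ A S2 X S2sym h2 p1 p4.
have hXA : S2 *m X *m A^T = A^T.
  have q1 : S2 *m X^T *m S2 = S2.
    by move: (congr1 trmx p1); rewrite !trmx_mul S2sym mulmxA.
  have q2 : (X^T *m S2)^T = X^T *m S2.
    by rewrite trmx_mul trmxK S2sym -p3 trmx_mul S2sym.
  have := AXS _ _ A S2 X^T S2sym h2 q1 q2.
  move/(congr1 trmx); rewrite !trmx_mul trmxK S2sym mulmxA => ->.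
  done.
pose C1 := series (fun k => cc R k *: S1 ^+ k).
pose Sh := series (fun k => sc R k *: S2 ^+ k).
pose C2 := series (fun k => cc R k *: S2 ^+ k).
have c1 : C1 @ \oo --> coshm S1 := cvg_mxseries _ _ S1 _ (@cc_bound R).
have c2 : Sh @ \oo --> sinhm S2 := cvg_mxseries _ _ S2 _ (@sc_bound R).
have c3 : C2 @ \oo --> coshm S2 := cvg_mxseries _ _ S2 _ (@cc_bound R).
pose Z : 'M[R]_n := 0.
pose g1 := fun Y : 'M[R]_n => (block_mx Y Z Z Z : 'M[R]_(n + n)).
pose g2 := fun Y : 'M[R]_n => (block_mx Z (A *m X *m Y) Z Z : 'M[R]_(n + n)).
pose g3 := fun Y : 'M[R]_n => (block_mx Z Z (Y *m X *m A^T) Z : 'M[R]_(n + n)).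
pose g4 := fun Y : 'M[R]_n => (block_mx Z Z Z Y : 'M[R]_(n + n)).
have d1 : (fun N => g1 (C1 N)) @ \oo --> g1 (coshm S1).
  apply: (lip_cvg _ _ _ _ 1 _ _ _ _ c1) => // x y.
  rewrite /g1 /Z sub_blk !subrr mul1r (le_trans (nm_block _ _ _ _ _ _ _ _ _)) //.
  by rewrite !normr0 !addr0.
have d2 : (fun N => g2 (Sh N)) @ \oo --> g2 (sinhm S2).
  apply: (lip_cvg _ _ _ _ (n%:R * `|A *m X|) _ _ _ _ c2) => [|x y]; first by rewrite mulr_ge0.
  rewrite /g2 /Z sub_blk !subrr -mulmxBr (le_trans (nm_block _ _ _ _ _ _ _ _ _)) //.
  by rewrite !normr0 add0r !addr0 nm_mul.
have d3 : (fun N => g3 (Sh N)) @ \oo --> g3 (sinhm S2).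
  apply: (lip_cvg _ _ _ _ (n%:R * `|X *m A^T|) _ _ _ _ c2) => [|x y]; first by rewrite mulr_ge0.
  rewrite /g3 /Z sub_blk !subrr -!mulmxA -mulmxBl (le_trans (nm_block _ _ _ _ _ _ _ _ _)) //.
  by rewrite !normr0 !add0r addr0 (le_trans (nm_mul _ _ _ _ _ _)) // mulrAC.
have d4 : (fun N => g4 (C2 N)) @ \oo --> g4 (coshm S2).
  apply: (lip_cvg _ _ _ _ 1 _ _ _ _ c3) => // x y.
  rewrite /g4 /Z sub_blk !subrr mul1r (le_trans (nm_block _ _ _ _ _ _ _ _ _)) //.
  by rewrite !normr0 !add0r.
have E : series (fun k => (k`!%:R)^-1 *: (block_mx 0 A A^T 0 : 'M[R]_(n + n)) ^+ k) =
    (fun N => g1 (C1 N)) + (fun N => g2 (Sh N)) + (fun N => g3 (Sh N)) + (fun N => g4 (C2 N)).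
  apply/funext => N; rewrite (series_blk _ _ A X S1 S2 h1 h2 hAX hXA) /=.
  by rewrite /g1 /g2 /g3 /g4 /Z !fctE !add_block_mx !addr0 !add0r.
have -> : block_mx (coshm S1) (A *m X *m sinhm S2) (sinhm S2 *m X *m A^T) (coshm S2) =
    g1 (coshm S1) + g2 (sinhm S2) + g3 (sinhm S2) + g4 (coshm S2).
  by rewrite /g1 /g2 /g3 /g4 /Z !add_block_mx !addr0 !add0r.
have H := cvgD (cvgD (cvgD d1 d2) d3) d4.
rewrite -E in H.
rewrite /expm /mxseries; apply: cvg_lim; first exact: norm_hausdorff.
apply: H.
Qed.
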